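(* For all integers $k\geq 1$, $V(F_{2k+1}-1)=V(F_{2k+1}-2)=F_{2k-1}$ and $V(F_{2k+2}-2)=F_{2k}$.
   Context: Fibonacci numbers: $F_0=0$, $F_1=1$, $F_{m+2}=F_{m+1}+F_m$. Standard Fibonacci words: $f_{-1}=b$, $f_0=a$, $f_{m+1}=f_mf_{m-1}$. The Fibonacci word ${\bf f}=\lim f_m=abaababa\cdots$, with prefix of length $j$ denoted ${\bf f}(0..j]$. $V(N)$ is the number of factorizations of ${\bf f}(0..N]$ as $f_m^{k_m}\cdots f_0^{k_0}$ with all $k_i\geq 0$ (into standard words $f_i$, $i\geq0$, in non-strictly decreasing order of index), counted up to leading zero exponents; $V(0)=1$. *)

(* Defs.v *)
From mathcomp Require Import all_boot.
Set Implicit Arguments. Unset Strict Implicit. Unset Printing Implicit Defensive.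

Fixpoint fib (n : nat) : nat :=
  match n with
  | 0 => 0
  | 1 => 1
  | (m.+1 as p).+1 => fib p + fib m
  end.

Definition la : bool := false.
Definition lb : bool := true.

(* Standard Fibonacci words f_m for m >= 0:
   f_0 = a, f_1 = f_0 f_{-1} = ab, f_{m+2} = f_{m+1} f_m. *)
Fixpoint fibw (m : nat) : seq bool :=
  match m with
  | 0 => [:: la]
  | 1 => [:: la; lb]
  | (p.+1 as q).+1 => fibw q ++ fibw p
  end.

(* Prefix f(0..N] of length N of the infinite Fibonacci word.  Every f_m is a
   prefix of f_{m+1}, and |f_N| = F_{N+2} >= N, so this is the length-N
   prefix of the limit word. *)
Definition fprefix (N : nat) : seq bool := take N (fibw N).

Definition fact_word (n : nat) (k : 'I_n.+1 -> nat) : seq bool :=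
  flatten [seq flatten (nseq (k i) (fibw i)) | i <- rev (enum 'I_n.+1)].

(* V(N): number of factorizations f_m^{k_m} ... f_0^{k_0} of f(0..N], counted up
   to leading zero exponents.  Identifying sequences up to leading zeros is the
   same as padding them to the fixed length N+1 (indices 0..N): if k_i >= 1 then
   |f_i| = F_{i+2} >= i+1 must be <= N, so i < N, and every k_i <= N.  Hence the
   factorizations are exactly the exponent vectors in {0..N}^{N+1}. *)
Definition V (N : nat) : nat :=
  #|[set k : {ffun 'I_N.+1 -> 'I_N.+1} |
       fact_word (fun i => nat_of_ord (k i)) == fprefix N]|.

(* Main.v *)
Require Import Defs.
From mathcomp Require Import all_boot zify.
Set Implicit Arguments. Unset Strict Implicit. Unset Printing Implicit Defensive.

Definition phi (w : seq bool) : seq bool :=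
  flatten [seq (if c then [:: la] else [:: la; lb]) | c <- w].

Lemma phi_cat u v : phi (u ++ v) = phi u ++ phi v.
Proof. by rewrite /phi map_cat flatten_cat. Qed.

Lemma phi_flatten (ss : seq (seq bool)) : phi (flatten ss) = flatten (map phi ss).
Proof. by elim: ss => [|s ss IH] //=; rewrite phi_cat IH. Qed.

Lemma fibwS m : fibw m.+1 = phi (fibw m).
Proof.
suff: fibw m.+1 = phi (fibw m) /\ fibw m.+2 = phi (fibw m.+1) by case.
elim: m => [|m [IH1 IH2]]; first by [].
split=> //.
by rewrite -[LHS]/(fibw m.+2 ++ fibw m.+1) -[RHS]/(phi (fibw m.+1 ++ fibw m)) phi_cat -IH2 -IH1.
Qed.

Lemma size_fibw m : size (fibw m) = fib m.+2.
Proof.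
suff: size (fibw m) = fib m.+2 /\ size (fibw m.+1) = fib m.+3 by case.
elim: m => [|m [IH1 IH2]]; first by [].
split=> //.
by rewrite -[fibw m.+2]/(fibw m.+1 ++ fibw m) size_cat IH1 IH2.
Qed.

Lemma fib_le n : fib n <= fib n.+1.
Proof. by case: n => [|n] //=; rewrite leq_addr. Qed.

Lemma fib_mono m n : m <= n -> fib m <= fib n.
Proof.
elim: n => [|n IH]; first by rewrite leqn0 => /eqP ->.
rewrite leq_eqVlt => /orP [/eqP -> //|]; rewrite ltnS => /IH H.
exact: leq_trans H (fib_le n).
Qed.

Lemma fib_pos n : 0 < fib n.+1.
Proof. elim: n => [|n IH] //=. exact: leq_trans IH (leq_addr _ _). Qed.

Lemma fib_ge m : m.+1 <= fib m.+2.
Proof.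
elim: m => [|m IH] //.
have h := fib_pos m. rewrite -[fib m.+3]/(fib m.+2 + fib m.+1). lia.
Qed.

Lemma fibw_prefix m m' : m <= m' -> take (size (fibw m)) (fibw m') = fibw m.
Proof.
elim: m' => [|m' IH]; first by rewrite leqn0 => /eqP ->; rewrite take_size.
rewrite leq_eqVlt => /orP [/eqP -> |]; first by rewrite take_size.
rewrite ltnS => /[dup] Hm /IH H.
have Hs : size (fibw m) <= size (fibw m') by rewrite !size_fibw; apply: fib_mono.
have Hp : take (size (fibw m')) (fibw m'.+1) = fibw m'.
  case: m' {IH H Hm Hs} => [|m'] //.
  by rewrite [fibw m'.+2]/= take_size_cat.
by rewrite -(take_takel _ Hs) Hp H.
Qed.

Lemma fprefix_take N m : N <= size (fibw m) -> fprefix N = take N (fibw m).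
Proof.
move=> HN; rewrite /fprefix.
case: (leqP m N) => Hm.
  by rewrite -(fibw_prefix Hm) (take_takel _ HN).
have HN' : N <= size (fibw N).
  rewrite size_fibw; apply: leq_trans (fib_ge N); exact: leqnSn.
by rewrite -(fibw_prefix (ltnW Hm)) (take_takel _ HN').
Qed.

Fixpoint G (j : nat) : seq bool :=
  match j with 0 => [::] | j'.+1 => phi (G j') ++ [:: la] end.

Lemma fibw_G j : fibw j.+1 = G j ++ (if odd j then [:: lb; la] else [:: la; lb]).
Proof.
elim: j => [|j IH] //.
rewrite fibwS IH phi_cat /= -catA.
by case: (odd j).
Qed.

Lemma size_G j : size (G j) = fib j.+3 - 2.
Proof.
have := size_fibw j.+1; rewrite fibw_G size_cat.
case: (odd j) => /= <-; lia.
Qed.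

Lemma fprefix_G j : fprefix (fib j.+3 - 2) = G j.
Proof.
rewrite (@fprefix_take _ j.+1); last by rewrite size_fibw leq_subr.
by rewrite fibw_G take_size_cat // size_G.
Qed.

Lemma fprefix_G1 j : fprefix (fib j.+3 - 1) = G j ++ [:: if odd j then lb else la].
Proof.
rewrite (@fprefix_take _ j.+1); last by rewrite size_fibw leq_subr.
have h := fib_ge j.+1.
rewrite fibw_G take_cat size_G ltnNge.
have -> : (fib j.+3 - 2 <= fib j.+3 - 1) by lia.
have -> : fib j.+3 - 1 - (fib j.+3 - 2) = 1 by lia.
by case: (odd j).
Qed.

Definition fw (n : nat) (k : 'I_n -> nat) : seq bool :=
  flatten [seq flatten (nseq (k i) (fibw i)) | i <- rev (enum 'I_n)].

Definition S (n B : nat) (w : seq bool) : nat :=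
  \sum_(k : {ffun 'I_n -> 'I_B}) (fw (fun i => nat_of_ord (k i)) == w).

Lemma V_S N : V N = S N.+1 N.+1 (fprefix N).
Proof.
rewrite /V /S -sum1dep_card big_mkcond /=.
by apply: eq_bigr => k _; case: eqP.
Qed.

Lemma flatten_nseq_a c : flatten (nseq c [:: la]) = nseq c la.
Proof. by elim: c => //= c ->. Qed.

Lemma fwS n (k : 'I_n.+1 -> nat) :
  fw k = phi (fw (fun i => k (lift ord0 i))) ++ nseq (k ord0) la.
Proof.
rewrite /fw enum_ordSl rev_cons -cats1 map_cat flatten_cat /= cats0.
rewrite flatten_nseq_a phi_flatten -map_rev -!map_comp.
congr (flatten _ ++ _); apply: eq_map => i.
have e : fibw (lift ord0 i) = phi (fibw i) by rewrite lift0 fibwS.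
rewrite /comp e.
by rewrite phi_flatten map_nseq.
Qed.

Lemma fw0 (k : 'I_0 -> nat) : fw k = [::].
Proof. by rewrite /fw enum_ord0. Qed.

Definition fcons (T : finType) n (t : T) (k : {ffun 'I_n -> T}) : {ffun 'I_n.+1 -> T} :=
  [ffun i => if unlift ord0 i is Some i' then k i' else t].

Lemma sum_ffunS (T : finType) n (F : {ffun 'I_n.+1 -> T} -> nat) :
  \sum_(k : {ffun 'I_n.+1 -> T}) F k = \sum_(t : T) \sum_(k : {ffun 'I_n -> T}) F (fcons t k).
Proof.
rewrite pair_big /=.
rewrite (reindex (fun p : T * {ffun 'I_n -> T} => fcons p.1 p.2)) //=.
apply: onW_bij.
exists (fun k : {ffun 'I_n.+1 -> T} => (k ord0, [ffun i => k (lift ord0 i)])).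
  move=> [t k] /=; rewrite /fcons ffunE unlift_none; congr (_, _).
  by apply/ffunP => i; rewrite !ffunE liftK.
move=> k; apply/ffunP => i; rewrite /fcons ffunE.
by case: unliftP => [j ->|->]; rewrite ?ffunE.
Qed.

Lemma eq_fw n (k1 k2 : 'I_n -> nat) : (forall i, k1 i = k2 i) -> fw k1 = fw k2.
Proof. by move=> H; rewrite /fw; congr flatten; apply: eq_map => i; rewrite H. Qed.

Definition D (n B c : nat) (w : seq bool) : nat :=
  \sum_(k : {ffun 'I_n -> 'I_B}) (phi (fw (fun i => nat_of_ord (k i))) ++ nseq c la == w).

Lemma S_rec n B w : S n.+1 B w = \sum_(j < B) D n B j w.
Proof.
rewrite /S sum_ffunS; apply: eq_bigr => t _; apply: eq_bigr => k _.
rewrite fwS /fcons ffunE unlift_none.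
congr (nat_of_bool (phi _ ++ _ == _)).
by apply: eq_fw => i; rewrite ffunE liftK.
Qed.

Lemma S0 B w : S 0 B w = (w == [::]).
Proof.
rewrite /S; under eq_bigr do rewrite fw0.
by rewrite sum_nat_const card_ffun !card_ord expn0 mul1n eq_sym.
Qed.

Lemma S_3 n B' w : S n.+1 B'.+3 w =
  D n B'.+3 0 w + D n B'.+3 1 w + D n B'.+3 2 w + \sum_(j < B') D n B'.+3 j.+3 w.
Proof. by rewrite S_rec !big_ord_recl !addnA. Qed.

Lemma phi_cons c x : phi (c :: x) = (if c then [:: la] else [:: la; lb]) ++ phi x.
Proof. by []. Qed.

Lemma phi_inj : injective phi.
Proof.
elim=> [|c x IH] [|d y] //.
- by rewrite phi_cons; case: d.
- by rewrite phi_cons; case: c.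
- rewrite !phi_cons; case: c; case: d => /=.
  + by case=> /IH ->.
  + by case=> {IH}; case: x => [|[] x].
  + by case=> {IH}; case: y => [|[] y].
  + by case=> /IH ->.
Qed.

Lemma catIr (s x y : seq bool) : x ++ s = y ++ s -> x = y.
Proof.
move/(f_equal rev); rewrite !rev_cat.
elim: (rev s) => [|c t IH] /=; first by move/(f_equal rev); rewrite !revK.
by case=> /IH.
Qed.

Lemma Dsol n B c w u : w = phi u ++ nseq c la -> D n B c w = S n B u.
Proof.
move=> ->; apply: eq_bigr => k _; congr nat_of_bool.
apply/eqP/eqP => [H|->] //; apply: phi_inj; exact: catIr H.
Qed.

Lemma Dnone n B c w : (forall x, phi x ++ nseq c la <> w) -> D n B c w = 0.
Proof. by move=> H; apply: big1 => k _; case: eqP => // /H. Qed.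

Lemma rev_phi x : rev (phi x) = [::] \/ (exists t, rev (phi x) = la :: t)
   \/ (exists t, rev (phi x) = lb :: la :: t).
Proof.
case/lastP: x => [|x c]; [by left|right].
rewrite -cats1 phi_cat rev_cat; case: c => /=; [left|right]; eexists; reflexivity.
Qed.

Lemma dec_rev x c w : phi x ++ nseq c la = w -> rev w = nseq c la ++ rev (phi x).
Proof. by move=> <-; rewrite rev_cat rev_nseq. Qed.

Lemma rev1 (x : bool) : rev [:: x] = [:: x]. Proof. by []. Qed.
Lemma rev2 (x y : bool) : rev [:: x; y] = [:: y; x]. Proof. by []. Qed.
Lemma rev3 (x y z : bool) : rev [:: x; y; z] = [:: z; y; x]. Proof. by []. Qed.

Lemma S_nil n B : S n B.+1 [::] = 1.
Proof.
elim: n => [|n IH]; first by rewrite S0.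
rewrite S_rec big_ord_recl (@Dsol _ _ _ _ [::]) // IH big1 // => i _.
apply: Dnone => x /dec_rev /=.
by case: (rev (phi x)).
Qed.

Lemma S_b n B : S n B [:: lb] = 0.
Proof.
case: n => [|n]; first by rewrite S0.
rewrite S_rec big1 // => [[[|c] _]] _ /=; apply: Dnone => x /dec_rev /=.
  by rewrite rev1; case: (rev_phi x) => [->|[[t ->]|[t ->]]].
by rewrite rev1; case.
Qed.

Lemma S_bb n B v : S n B (v ++ [:: lb; lb]) = 0.
Proof.
case: n => [|n]; first by rewrite S0; case: v.
rewrite S_rec big1 // => [[[|c] _]] _ /=; apply: Dnone => x /dec_rev;
  rewrite rev_cat rev2 /=.
  by case: (rev_phi x) => [->|[[t ->]|[t ->]]].
by case.
Qed.

Lemma revphiG j : rev (phi (G j)) = [::] \/ exists t, rev (phi (G j)) = lb :: t.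
Proof.
case: j => [|j]; first by left.
right; rewrite /= phi_cat rev_cat; eexists; reflexivity.
Qed.

Lemma main j n B : 2 < B -> j < n ->
  [/\ S n B (G j) = fib j.+1, S n B (G j ++ [:: la]) = fib j.+1
    & S n B (G j ++ [:: lb]) = fib j].
Proof.
case: B => [|[|[|B']]] // _.
elim: j n => [|j IH] [|n] // Hn.
- split => /=.
  + exact: S_nil.
  + rewrite S_3 (@Dsol _ _ _ _ [:: lb]) // S_b (@Dsol _ _ _ _ [::]) // S_nil.
    rewrite Dnone; last by move=> x /dec_rev; rewrite rev1 /=; case.
    rewrite big1 // => i _; apply: Dnone => x /dec_rev; rewrite rev1 /=; case.
    by case.
  + exact: S_b.
- have [h1 h2 h3] := IH n Hn.
  have eG : G j.+1 = phi (G j) ++ [:: la] by [].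
  split; rewrite eG.
  + rewrite S_3 (@Dsol _ _ _ _ (G j ++ [:: lb])); last by rewrite phi_cat cats0.
    rewrite (@Dsol _ _ _ _ (G j)) // h1 h3.
    rewrite Dnone; last first.
      move=> x /dec_rev; rewrite rev_cat rev1 /=.
      by case: (revphiG j) => [->|[t ->]]; case.
    rewrite big1; first by rewrite !addn0 addnC.
    move=> i _; apply: Dnone => x /dec_rev; rewrite rev_cat rev1 /=.
    by case: (revphiG j) => [->|[t ->]]; case.
  + rewrite S_3 (@Dsol _ _ _ _ (G j ++ [:: lb; lb])); last by rewrite phi_cat cats0 -catA.
    rewrite S_bb (@Dsol _ _ _ _ (G j ++ [:: lb])); last by rewrite phi_cat -catA.
    rewrite (@Dsol _ _ _ _ (G j)); last by rewrite -catA.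
    rewrite h1 h3.
    rewrite big1 ?addn0 => [|i _]; last first.
      apply: Dnone => x /dec_rev; rewrite -catA rev_cat rev2 /=.
      by case: (revphiG j) => [->|[t ->]]; case.
    by rewrite add0n addnC.
  + rewrite S_3 (@Dsol _ _ _ _ (G j ++ [:: la])); last by rewrite phi_cat cats0 -catA.
    rewrite h2 !Dnone ?big1 ?addn0 //; try (move=> i _; apply: Dnone);
      move=> x /dec_rev; rewrite -catA rev_cat rev2 /=; by case.
Qed.

Lemma V0 : V 0 = 1.
Proof. by rewrite V_S S_nil. Qed.

Lemma V1 : V 1 = 1.
Proof.
rewrite V_S S_rec !big_ord_recl big_ord0 addn0.
rewrite (@Dsol _ _ _ _ [:: lb]) // S_b (@Dsol _ _ _ _ [::]) //.
by rewrite S_nil.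
Qed.

Lemma VG j : 1 < j ->
  V (fib j.+3 - 2) = fib j.+1 /\ (odd j = false -> V (fib j.+3 - 1) = fib j.+1).
Proof.
move=> hj.
have h1 := fib_ge j.+1.
have h2 : fib 5 <= fib j.+3 by apply: fib_mono.
have e5 : fib 5 = 5 by [].
rewrite e5 in h2.
have H1 : 2 < (fib j.+3 - 2).+1 by lia.
have H2 : j < (fib j.+3 - 2).+1 by lia.
have H1' : 2 < (fib j.+3 - 1).+1 by lia.
have H2' : j < (fib j.+3 - 1).+1 by lia.
split; first by rewrite V_S fprefix_G; case: (main H1 H2).
move=> hodd; rewrite V_S fprefix_G1 hodd.
by case: (main H1' H2').
Qed.

Theorem corollary1 (k : nat) (hk : 1 <= k) :
  [/\ V (fib k.*2.+1 - 1) = fib k.*2.-1,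
      V (fib k.*2.+1 - 2) = fib k.*2.-1
    & V (fib k.*2.+2 - 2) = fib k.*2].
Proof.
case: k hk => [|[|k]] // _.
  by rewrite /= V0 V1.
have hA := VG (j := k.+1.*2) isT.
have hB := VG (j := k.+1.*2.+1) isT.
rewrite !doubleS in hA hB *.
case: hA => hA1 hA2; case: hB => hB1 _.
split.
- rewrite hA2 //. by rewrite -addn2 oddD odd_double.
- exact: hA1.
- exact: hB1.
Qed.
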